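(* Let $N\ge 1$, $g>0$, $h>0$, and $u_m,\alpha_1,\dots,\alpha_N\in\mathbb{R}$. Let $A_N\in\mathbb{R}^{(N+2)\times(N+2)}$ be the matrix $$A_N=\begin{pmatrix} 0&1&0&\cdots&0\\ gh-u_m^2-\sum_{i=1}^N\frac{\alpha_i^2}{2i+1} & 2u_m & \frac{2\alpha_1}{3} & \cdots & \frac{2\alpha_N}{2N+1}\\ -2u_m\alpha_1 & 2\alpha_1 & u_m & & \\ \vdots & \vdots & & \ddots & \\ -2u_m\alpha_N & 2\alpha_N & & & u_m \end{pmatrix},$$ where the lower-right $N\times N$ block is $u_m I_N$ and all unspecified entries are zero. Then $$\det(A_N-\lambda I)=(u_m-\lambda)^N\left[(\lambda-u_m)^2-gh-\sum_{i=1}^N\frac{3\alpha_i^2}{2i+1}\right],$$ so the eigenvalues of $A_N$ are $$\lambda_{1,2}=u_m\pm\sqrt{gh+\sum_{i=1}^N\frac{3\alpha_i^2}{2i+1}},\qquad \lambda_{i+2}=u_m\ (i=1,\dots,N).$$ Moreover, $A_N$ is diagonalizable over $\mathbb{R}$ (the eigenvalue $u_m$ has an $N$-dimensional eigenspace), so the system $\partial_t U + A_N(U)\partial_x U=0$ is hyperbolic whenever $h>0$.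
   Context: $A_N$ is the system matrix (flux Jacobian minus non-conservative matrix) of the Shallow Water Linearized Moment Equations (SWLME) without source terms, written in the variables $U=(h,hu_m,h\alpha_1,\dots,h\alpha_N)$, where $h$ is the water height, $u_m$ the mean horizontal velocity, $\alpha_i$ the coefficients of the velocity profile in scaled Legendre polynomials, and $g$ the gravitational constant. *)

(* Defs.v *)
From HB Require Import structures.
From mathcomp Require Import all_boot all_order all_algebra.
Set Implicit Arguments. Unset Strict Implicit. Unset Printing Implicit Defensive.
Import Order.TTheory GRing.Theory Num.Theory.
Local Open Scope ring_scope.

(* Coefficients alpha_1..alpha_N are given as alpha : nat -> R, only alpha 1 .. alpha N are used. *)

Definition alpha_sum (R : fieldType) (N : nat) (alpha : nat -> R) (c : R) : R :=
  \sum_(1 <= i < N.+1) c * alpha i ^+ 2 / (2 * i + 1)%:R.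

Definition SWLME_A (R : fieldType) (N : nat) (g h um : R) (alpha : nat -> R)
  : 'M[R]_(N.+2) :=
  \matrix_(i < N.+2, j < N.+2)
    if (i == 0%N :> nat) then (if (j == 1%N :> nat) then 1 else 0)
    else if (i == 1%N :> nat) then
      (if (j == 0%N :> nat) then g * h - um ^+ 2 - alpha_sum N alpha 1
       else if (j == 1%N :> nat) then 2 * um
       else 2 * alpha (j.-1) / (2 * j.-1 + 1)%:R)
    else
      (if (j == 0%N :> nat) then - (2 * um * alpha (i.-1))
       else if (j == 1%N :> nat) then 2 * alpha (i.-1)
       else if (j == i :> nat) then um else 0).

(* Main.v *)
Require Import Defs.
From HB Require Import structures.
From mathcomp Require Import all_boot all_order all_algebra.
From mathcomp Require Import ring lra zify.
Import Order.TTheory GRing.Theory Num.Theory.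
Local Open Scope ring_scope.

Lemma det22 (R : comNzRingType) (M : 'M[R]_2) :
  \det M = M 0 0 * M 1 1 - M 0 1 * M 1 0.
Proof.
rewrite (expand_det_row _ 0) !big_ord_recl big_ord0 /cofactor !det_mx11 !mxE /=.
rewrite addr0 !expr0 expr1 !mul1r mulN1r.
have -> : lift 0 (0 : 'I_1) = 1 by apply/val_inj.
rewrite mulrN; congr (_ * _ - _ * _).
by have -> : lift 1 (0 : 'I_1) = 0 by apply/val_inj.
Qed.

Section S.
Variables (R : fieldType) (N : nat) (g h um : R) (alpha : nat -> R).
Definition av : 'cV[R]_N := \col_k (2 * alpha k.+1).
Definition bv : 'rV[R]_N := \row_k (2 * alpha k.+1 / (2 * k.+1 + 1)%:R).
Definition e0 : 'rV[R]_2 := delta_mx 0 0.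
Definition Pm (l : R) : 'M[R]_2 := \matrix_(i < 2, j < 2)
  if i == 0 then (if j == 0 then - l else 1)
  else (if j == 0 then g * h - um ^+ 2 - alpha_sum N alpha 1 else 2 * um - l).
Definition Qm : 'M[R]_(2, N) := delta_mx 1 0 *m bv.
Definition rv : 'rV[R]_2 := \row_j (if j == 0 then - um else 1).

Lemma Eblock (l : R) :
  (SWLME_A N g h um alpha - l%:M : 'M_(2 + N)) =
  block_mx (Pm l) Qm (av *m rv) ((um - l)%:M).
Proof.
set E := (_ - _ : 'M_(2 + N)).
rewrite -(submxK E); congr block_mx; apply/matrixP => i j; rewrite !mxE /=.
{ case: i => [[|[|i]] Hi] //; case: j => [[|[|j]] Hj] //=; rewrite ?mxE /=.
  all: by rewrite ?sub0r ?mulr1n ?mulr0n ?subr0. }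
{ rewrite -(inj_eq val_inj) /= big_ord1 !mxE /= !add1n.
  case: i => [[|[|i]] Hi] //=; rewrite ?mul0r ?mul1r ?mulr0n ?subr0 //. }
{ rewrite -(inj_eq val_inj) /= big_ord1 !mxE /= !add1n.
  case: j => [[|[|j]] Hj] //=; rewrite ?mulr0n ?subr0.
  by rewrite mulrN mulrAC. by rewrite mulr1. }
rewrite -(inj_eq val_inj) /= !eqn_add2l eq_sym.
case: (eqVneq i j) => [->|ne]; first by rewrite !eqxx mulr1n.
have ne' : (i : nat) != j := ne.
by rewrite (negbTE ne') !mulr0n subr0.
Qed.

Definition Lm : 'M[R]_(2 + N) := block_mx 1%:M 0 (- (av *m e0)) 1%:M.
Definition Rm : 'M[R]_(2 + N) := block_mx 1%:M 0 (av *m e0) 1%:M.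

Lemma e0P l : e0 *m Pm l = rv - (l - um) *: e0.
Proof.
apply/matrixP => i j; rewrite !mxE big_ord_recl big_ord1 !mxE /=.
rewrite (ord1 i) -!(inj_eq val_inj) /=.
case: j => [[|[|j]] Hj] //=; rewrite ?mxE /= ?mul1r ?mul0r ?addr0 ?mulr0 ?subr0 ?mulr1 //.
by rewrite opprB addKr.
Qed.

Lemma e0Q : e0 *m Qm = 0.
Proof. by rewrite /Qm mulmxA /e0 mul_delta_mx_0 ?mul0mx. Qed.

Lemma LER l :
  Lm *m block_mx (Pm l) Qm (av *m rv) ((um - l)%:M) *m Rm =
  block_mx (Pm l + Qm *m (av *m e0)) Qm 0 ((um - l)%:M).
Proof.
rewrite /Lm /Rm !mulmx_block.
rewrite !(@mul1mx R) !(@mul0mx R) !(@mulmx0 R) !(@mulmx1 R) !addr0 !add0r.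
rewrite !mulNmx -!mulmxA e0Q mulmx0 oppr0 add0r e0P.
congr block_mx.
rewrite mulmxBr opprB subrK -scalemxAr mul_scalar_mx -scalerDl.
by rewrite addrA subrK subrr scale0r.
Qed.


Lemma S3E : alpha_sum N alpha 3 = 3 * alpha_sum N alpha 1.
Proof. rewrite /alpha_sum mulr_sumr; apply: eq_bigr => i _; ring. Qed.

Lemma bvav : bv *m av = (4 * alpha_sum N alpha 1)%:M.
Proof.
apply/matrixP => i j; rewrite (ord1 i) (ord1 j) !mxE /= mulr1n.
rewrite /alpha_sum big_add1 /= big_mkord mulr_sumr; apply: eq_bigr => k _.
rewrite !mxE; ring.
Qed.

Lemma detP l : \det (Pm l + Qm *m (av *m e0)) =
  (l - um) ^+ 2 - g * h - alpha_sum N alpha 3.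
Proof.
rewrite /Qm !mulmxA -(mulmxA _ bv) bvav mul_mx_scalar -scalemxAl /e0 mul_delta_mx.
rewrite det22 !mxE /= S3E; ring.
Qed.

Lemma detE l : \det (SWLME_A N g h um alpha - l%:M) =
  (um - l) ^+ N * ((l - um) ^+ 2 - g * h - alpha_sum N alpha 3).
Proof.
have := congr1 determinant (LER l).
rewrite -Eblock !det_mulmx det_ublock detP det_scalar /Lm /Rm det_lblock det_lblock !det1 !mul1r mulr1.
by move=> ->; rewrite mulrC.
Qed.

Lemma unitL : Lm \in unitmx.
Proof. by rewrite unitmxE /Lm det_lblock !det1 mul1r unitr1. Qed.
Lemma unitR : Rm \in unitmx.
Proof. by rewrite unitmxE /Rm det_lblock !det1 mul1r unitr1. Qed.

Lemma rank_um : g * h + alpha_sum N alpha 3 != 0 ->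
  \rank (SWLME_A N g h um alpha - um%:M) = 2.
Proof.
move=> Hnz.
have uP : Pm um + Qm *m (av *m e0) \in unitmx.
  rewrite unitmxE detP subrr expr0n /= sub0r -opprD unitfE oppr_eq0 //.
have := LER um; rewrite -Eblock subrr raddf0 => E'.
have -> : \rank (SWLME_A N g h um alpha - um%:M) =
    \rank (block_mx (Pm um + Qm *m (av *m e0)) Qm 0 0 : 'M_(2 + N)).
  rewrite -E' mxrankMfree ?row_free_unit ?unitR //.
  by symmetry; apply: eqmx_rank; apply/eqmxP; apply: eqmxMfull; rewrite row_full_unit unitL.
rewrite block_mxEv row_mx0 rank_col_mx0.
apply/eqP; rewrite eqn_leq rank_leq_row /=.
apply: leq_trans (mxrankM_maxl _ (col_mx (1%:M : 'M_2) (0 : 'M_(N, 2)))).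
by rewrite mul_row_col mulmx1 mulmx0 addr0 mxrank_unit.
Qed.
End S.

Theorem mainTheorem1 (R : rcfType) (N : nat) (g h um : R) (alpha : nat -> R) :
  (1 <= N)%N -> 0 < g -> 0 < h ->
  let A := SWLME_A N g h um alpha in
  let c := Num.sqrt (g * h + alpha_sum N alpha 3) in
  (forall lambda : R,
     \det (A - lambda%:M) =
     (um - lambda) ^+ N * ((lambda - um) ^+ 2 - g * h - alpha_sum N alpha 3))
  /\ (forall lambda : R,
        eigenvalue A lambda <-> [\/ lambda = um + c, lambda = um - c | lambda = um])
  /\ \rank (eigenspace A um) = N
  /\ diagonalizable A.
Proof.
move=> HN Hg Hh A c.
have S3ge0 : 0 <= alpha_sum N alpha 3.
  apply: sumr_ge0 => i _; apply: mulr_ge0; last by rewrite invr_ge0 ler0n.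
  by apply: mulr_ge0; [rewrite ler0n | apply: sqr_ge0].
have ghpos : 0 < g * h by apply: mulr_gt0.
have Kpos : 0 < g * h + alpha_sum N alpha 3 by lra.
have cpos : 0 < c by rewrite sqrtr_gt0.
have c2 : c ^+ 2 = g * h + alpha_sum N alpha 3 by rewrite sqr_sqrtr ?ltW.
have detA := @detE R N g h um alpha.
have eigE : forall l, eigenvalue A l =
    (um == l) || ((l - um == c) || (l - um == - c)).
  move=> l; rewrite /eigenvalue /eigenspace kermx_eq0 row_free_unit unitmxE unitfE negbK.
  rewrite detA mulf_eq0 expf_eq0 HN /= -addrA -opprD subr_eq0 -c2 subr_eq0 eqf_sqr //.
split; first exact: detA.
split.
  move=> l; rewrite eigE; split.
    case/orP => [/eqP H|/orP[/eqP H|/eqP H]]; [constructor 3|constructor 1|constructor 2]; lra.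
  case=> ->; apply/orP.
  - by right; apply/orP; left; apply/eqP; lra.
  - by right; apply/orP; right; apply/eqP; lra.
  - by left; apply/eqP; lra.
have rk : \rank (eigenspace A um) = N.
  rewrite mxrank_ker rank_um; first by rewrite subn2. 
  by rewrite gt_eqF.
split; first exact: rk.
set rs := [:: um; um + c; um - c].
apply/diagonalizablePeigen; exists rs.
  rewrite /= !inE !negb_or andbT.
  have n1 : um != um + c by apply/eqP => H; lra.
  have n2 : um != um - c by apply/eqP => H; lra.
  have n3 : um + c != um - c by apply/eqP => H; lra.
  by rewrite n1 n2 n3.
apply/eqmxP; rewrite submx1 sub1mx /row_full.
rewrite (big_nth 0) big_mkord.
have inj : {in predT &, injective (fun i : 'I_(size rs) => rs`_i)}.
  move=> i j _ _ /= Hij; apply/val_inj; move: Hij.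
  case: i => [[|[|[|i]]] Hi] //; case: j => [[|[|[|j]]] Hj] //= H; exfalso; lra.
have Heq : \rank (\sum_(i < 3) eigenspace A rs`_i) =
    (\sum_(i < 3) \rank (eigenspace A rs`_i))%N.
  by have /mxdirectP /= -> := mxdirect_sum_eigenspace A inj.
have Hle : (\rank (\sum_(i < 3) eigenspace A rs`_i) <= N.+2)%N := rank_leq_row _.
rewrite Heq in Hle; rewrite [size rs]/= Heq.
rewrite !big_ord_recl !big_ord0 /= in Hle *.
have r1 : (0 < \rank (eigenspace A (um + c)))%N.
  rewrite lt0n mxrank_eq0; have := eigE (um + c); rewrite /eigenvalue => ->.
  by apply/orP; right; apply/orP; left; apply/eqP; lra.
have r2 : (0 < \rank (eigenspace A (um - c)))%N.
  rewrite lt0n mxrank_eq0; have := eigE (um - c); rewrite /eigenvalue => ->.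
  by apply/orP; right; apply/orP; right; apply/eqP; lra.
apply/eqP; lia.
Qed.
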